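(* Let $\Gamma$ be a vertex-transitive graph on $n$ vertices. Then $\Gamma$ has an induced subgraph $\Gamma'$ with at least $e(\Gamma)/2$ edges satisfying $\chi(\overline{\Gamma'})\le (\ln 4)\,n/\omega(\Gamma)$.
   Context: $\omega(\Gamma)$ is the clique number of $\Gamma$, $\overline{\Gamma'}$ is the complement of $\Gamma'$, and $\chi$ denotes chromatic number. *)

(* Defs.v *)
From mathcomp Require Import all_boot.
From mathcomp Require Import fingroup perm.
From Stdlib Require Import Reals.

Set Implicit Arguments.
Unset Strict Implicit.
Unset Printing Implicit Defensive.

Section Graphs.
Variable T : finType.

(* A finite simple graph on vertex type T is a symmetric irreflexive relation e. *)

Definition is_automorphism (e : rel T) (g : {perm T}) : Prop :=
  forall u v, e (g u) (g v) = e u v.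

Definition vertex_transitive (e : rel T) : Prop :=
  forall x y : T, exists g : {perm T}, is_automorphism e g /\ g x = y.

Definition num_edges (e : rel T) (S : {set T}) : nat :=
  #|[set A : {set T} | (A \subset S) &&
        [exists x, exists y, e x y && (A == [set x; y])]]|.

Definition compl (e : rel T) : rel T := fun x y => (x != y) && ~~ e x y.

Definition is_clique (e : rel T) (A : {set T}) : bool :=
  [forall x in A, forall y in A, (x != y) ==> e x y].

Definition omega (e : rel T) : nat := \max_(A : {set T} | is_clique e A) #|A|.

Definition colorable (adj : rel T) (V : {set T}) (k : nat) : bool :=
  [exists f : {ffun T -> 'I_k},
     [forall x in V, forall y in V, ((x != y) && adj x y) ==> (f x != f y)]].

Lemma colorable_card (adj : rel T) (V : {set T}) : exists k, colorable adj V k.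
Proof.
exists #|T|; apply/existsP; exists [ffun x => enum_rank x].
apply/forallP => x; apply/implyP => _; apply/forallP => y; apply/implyP => _.
apply/implyP => /andP [nxy _]; rewrite !ffunE.
by rewrite (inj_eq enum_rank_inj).
Qed.

Definition chi (adj : rel T) (V : {set T}) : nat :=
  ex_minn (colorable_card adj V).

End Graphs.

(* Main.v *)
Require Import Defs.
From mathcomp Require Import all_boot.
From mathcomp Require Import fingroup perm.
From Stdlib Require Import Reals.
From Stdlib Require Import Lra Lia Compare_dec.
From mathcomp Require Import zify.

Section AnalPart.
Local Open Scope R_scope.


Lemma exp_pow_INR (x : R) (n : nat) : exp x ^ n = exp (INR n * x).
Proof.
elim: n => [|n IH] /=.
- by rewrite Rmult_0_l exp_0.
- rewrite IH -exp_plus. f_equal. destruct n; simpl; lra.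
Qed.

Lemma big_ineq1 : 4 * 25462 ^ 256 > 25600 ^ 256.
Proof.
rewrite !pow_IZR -mult_IZR. apply Rlt_gt, IZR_lt. vm_compute. reflexivity.
Qed.

Lemma big_ineq2 : 6542 ^ 64 > 4 * 6400 ^ 64.
Proof.
rewrite !pow_IZR -mult_IZR. apply Rlt_gt, IZR_lt. vm_compute. reflexivity.
Qed.

Lemma ln4_lo : 138/100 < ln 4.
Proof.
have H1 : exp (- (138/25600)) >= 25462/25600.
{ pose proof (exp_ineq1_le (- (138/25600))). lra. }
have H2 : exp (- (138/100)) = exp (- (138/25600)) ^ 256.
{ rewrite exp_pow_INR. f_equal. rewrite INR_IZR_INZ. simpl. lra. }
have H3 : (25462/25600) ^ 256 <= exp (- (138/25600)) ^ 256.
{ apply pow_incr. lra. }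
have H4 : (25462/25600) ^ 256 * 25600 ^ 256 = 25462 ^ 256.
{ rewrite -Rpow_mult_distr. f_equal. field. }
pose proof big_ineq1.
have Hp : 0 < 25600 ^ 256 by apply pow_lt; lra.
have H5 : exp (- (138/100)) > /4.
{ rewrite H2. apply Rlt_gt. apply Rlt_le_trans with ((25462/25600) ^ 256); [|exact H3].
  apply (Rmult_lt_reg_r (25600 ^ 256)); [exact Hp|]. rewrite H4. lra. }
rewrite exp_Ropp in H5.
have H6 : exp (138/100) < 4.
{ have : 0 < exp (138/100) by apply exp_pos.
  move=> He.
  apply (Rmult_lt_reg_r (/ exp (138/100))). apply Rinv_0_lt_compat; lra.
  rewrite Rinv_r; lra. }
rewrite -(ln_exp (138/100)). apply ln_increasing; [apply exp_pos | exact H6].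
Qed.

Lemma ln4_hi : ln 4 < 142/100.
Proof.
have H1 : exp (142/6400) >= 6542/6400.
{ pose proof (exp_ineq1_le (142/6400)). lra. }
have H2 : exp (142/100) = exp (142/6400) ^ 64.
{ rewrite exp_pow_INR. f_equal. rewrite INR_IZR_INZ. simpl. lra. }
have H3 : (6542/6400) ^ 64 <= exp (142/6400) ^ 64.
{ apply pow_incr. lra. }
have H4 : (6542/6400) ^ 64 * 6400 ^ 64 = 6542 ^ 64.
{ rewrite -Rpow_mult_distr. f_equal. field. }
pose proof big_ineq2.
have Hp : 0 < 6400 ^ 64 by apply pow_lt; lra.
have H6 : 4 < exp (142/100).
{ rewrite H2. apply Rlt_le_trans with ((6542/6400) ^ 64); [|exact H3].
  apply (Rmult_lt_reg_r (6400 ^ 64)); [exact Hp|]. rewrite H4. lra. }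
rewrite -(ln_exp (142/100)). apply ln_increasing; [lra | exact H6].
Qed.

Lemma small_t_bound (t : nat) (p : R) :
  (le 2 t /\ le t 9) -> 138/100 < p * (INR t + 1) -> p <= 1/2 ->
  (1 - p) ^ t <= 2928/10000.
Proof.
move=> Ht Hp Hp2.
have HT : 0 < INR t + 1 by pose proof (pos_INR t); lra.
have Hlt : 138/100 / (INR t + 1) < p.
{ apply (Rmult_lt_reg_r (INR t + 1)); [exact HT|].
  unfold Rdiv. rewrite Rmult_assoc Rinv_l; lra. }
have Hq : (1 - p) ^ t <= (1 - 138/100 / (INR t + 1)) ^ t.
{ apply pow_incr. split; lra. }
eapply Rle_trans; [exact Hq|].
destruct Ht as [H1 H2].
do 10 (destruct t as [|t]; [simpl in *; try lia; lra|]). lia.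
Qed.

Lemma anal (n w t : nat) : lt 0 w -> (le (Nat.mul 2 w) n \/ w = n) ->
  INR t <= ln 4 * INR n / INR w -> ln 4 * INR n / INR w < INR t + 1 ->
  ((INR n - INR w) / INR n) ^ t <= 2928/10000.
Proof.
move=> Hw Hn Ht1 Ht2.
pose proof ln4_lo as Llo. pose proof ln4_hi as Lhi.
have Wpos : 0 < INR w by apply lt_0_INR; lia.
destruct Hn as [Hn | Hn].
2:{ subst n. replace (INR w - INR w) with 0 by ring.
  unfold Rdiv at 1. rewrite Rmult_0_l.
  replace (ln 4 * INR w / INR w) with (ln 4) in Ht2 by (field; lra).
  destruct t as [|t]; [simpl in Ht2; lra|]. rewrite pow_ne_zero; [lra|lia]. }
have Npos : 0 < INR n by apply lt_0_INR; lia.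
have H2w : 2 * INR w <= INR n.
{ replace 2 with (INR 2) by (simpl; ring). rewrite -mult_INR. apply le_INR. lia. }
set p := INR w / INR n.
have Hx : (INR n - INR w) / INR n = 1 - p by unfold p; field; lra.
rewrite Hx.
have Hp0 : 0 < p by unfold p; apply Rdiv_lt_0_compat; lra.
have Hp2 : p <= 1/2.
{ unfold p. apply (Rmult_le_reg_r (INR n)); [lra|].
  unfold Rdiv. rewrite Rmult_assoc Rinv_l; lra. }
have HLp : ln 4 * INR n / INR w = ln 4 / p by unfold p; field; lra.
rewrite HLp in Ht1 Ht2.
have Ha : ln 4 < p * (INR t + 1).
{ apply (Rmult_lt_reg_r (/ p)). apply Rinv_0_lt_compat; lra.
  replace (p * (INR t + 1) * / p) with (INR t + 1) by (field; lra). exact Ht2. }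
have Hb : INR t * p <= ln 4.
{ apply (Rmult_le_reg_r (/ p)). apply Rinv_0_lt_compat; lra.
  replace (INR t * p * / p) with (INR t) by (field; lra). exact Ht1. }
have Ht2' : le 2 t.
{ destruct (le_lt_dec 2 t) as [h|h]; [exact h|].
  have : INR t <= 1 by (replace 1 with (INR 1) by reflexivity; apply le_INR; lia).
  move=> ?. nra. }
destruct (le_lt_dec t 9) as [Hs | Hl].
- apply small_t_bound; [lia | lra | lra].
- have T10 : 10 <= INR t by (replace 10 with (INR 10) by (simpl; ring); apply le_INR; lia).
  have Hpsmall : p <= 142/1000 by nra.
  have E1 : 0 <= 1 - p <= exp (- p) by pose proof (exp_ineq1_le (-p)); lra.
  have E2 : (1 - p) ^ (S t) <= exp (- p) ^ (S t) by apply pow_incr; exact E1.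
  rewrite exp_pow_INR S_INR in E2.
  have E3 : exp ((INR t + 1) * - p) < exp (- ln 4) by apply exp_increasing; nra.
  rewrite exp_Ropp exp_ln in E3; [|lra].
  simpl in E2.
  have E4 : 0 <= (1 - p) ^ t by apply pow_le; lra.
  nra.
Qed.

End AnalPart.

Section CombPart.
Local Set Implicit Arguments.
Local Unset Strict Implicit.
Local Unset Printing Implicit Defensive.
Local Open Scope nat_scope.


Definition autb (T : finType) (e : rel T) (g : {perm T}) : bool :=
  [forall u, forall v, e (g u) (g v) == e u v].
Definition Aut (T : finType) (e : rel T) : {set {perm T}} := [set g | autb e g].
Definition inK (T : finType) (K : {set T}) (g : {perm T}) (u : T) : bool :=
  [exists k in K, g k == u].
Definition Sf (T : finType) (K : {set T}) t (f : {ffun 'I_t -> {perm T}}) : {set T} :=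
  [set u | [exists i, inK K (f i) u]].
Definition E2 (T : finType) (e : rel T) (X Y : {set T}) : nat :=
  \sum_u \sum_v ((u \in X) && (v \in Y) && e u v).

Lemma autE (T : finType) (e : rel T) (g : {perm T}) : g \in Aut e -> forall u v, e (g u) (g v) = e u v.
Proof. by rewrite inE => /forallP H u v; move: (H u) => /forallP /(_ v) /eqP. Qed.

Lemma autI (T : finType) (e : rel T) (g : {perm T}) : (forall u v, e (g u) (g v) = e u v) -> g \in Aut e.
Proof. by move=> H; rewrite inE; apply/forallP => u; apply/forallP => v; rewrite H. Qed.

Lemma autM (T : finType) (e : rel T) (g h : {perm T}) : g \in Aut e -> h \in Aut e -> (g * h)%g \in Aut e.
Proof. by move=> /autE Hg /autE Hh; apply: autI => u v; rewrite !permM Hh Hg. Qed.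

Lemma autV (T : finType) (e : rel T) (g : {perm T}) : g \in Aut e -> (g^-1)%g \in Aut e.
Proof. move=> /autE Hg; apply: autI => u v. by rewrite -Hg !permKV. Qed.

Lemma vt_aut (T : finType) (e : rel T) : vertex_transitive e ->
  forall x y, exists2 g, g \in Aut e & g x = y.
Proof. move=> H x y; case: (H x y) => g [Ha Hg]; exists g => //; exact: autI. Qed.

Lemma sum_bool_card (X : finType) (A : {pred X}) (P : pred X) :
  \sum_(x in A) (P x : nat) = #|[set x in A | P x]|.
Proof.
rewrite -sum1dep_card big_mkcondr /=; apply: eq_bigr => x _; by case: (P x).
Qed.

Lemma cnt_const (T : finType) (e : rel T) : vertex_transitive e ->
  forall x y x' y', \sum_(g in Aut e) (g x == y : nat) = \sum_(g in Aut e) (g x' == y' : nat).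
Proof.
move=> Hvt x y x' y'.
case: (vt_aut Hvt x' x) => h Hh Hhx. case: (vt_aut Hvt y y') => k Hk Hky.
have inj : injective (fun g : {perm T} => (h * g * k)%g).
{ move=> g1 g2 /= /mulIg /mulgI. done. }
rewrite [RHS](reindex_inj inj) /=. apply: eq_big => g.
- apply/idP/idP => Hg.
  + by apply: autM => //; apply: autM.
  + have -> : g = (h^-1 * (h * g * k) * k^-1)%g by rewrite !mulgA mulVg mul1g mulgK.
    apply: autM; first apply: autM.
    * exact: autV.
    * exact: Hg.
    * exact: autV.
- move=> _. by rewrite !permM Hhx -Hky (inj_eq perm_inj).
Qed.

Lemma deg_const (T : finType) (e : rel T) : vertex_transitive e ->
  forall x x', \sum_v (e x v : nat) = \sum_v (e x' v : nat).
Proof.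
move=> Hvt x x'. case: (vt_aut Hvt x x') => g Hg <-.
rewrite [RHS](reindex_inj (@perm_inj _ g)) /=. apply: eq_bigr => v _.
by rewrite (autE Hg).
Qed.

Lemma card_aut (T : finType) (e : rel T) x :
  #|Aut e| = \sum_y \sum_(g in Aut e) (g x == y : nat).
Proof.
rewrite exchange_big /= -sum1_card. apply: eq_bigr => g _.
rewrite (bigD1 (g x)) //= eqxx big1 // => y Hy. by rewrite eq_sym (negbTE Hy).
Qed.

Lemma inK_sum (T : finType) (K : {set T}) (g : {perm T}) u :
  (inK K g u : nat) = \sum_(k in K) (g k == u : nat).
Proof.
case: (boolP (inK K g u)) => H.
- case/existsP: H => k0 /andP [Hk0 /eqP Hg].
  rewrite (bigD1 k0) //= Hg eqxx big1 // => k /andP [_ Hk].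
  apply/eqP; rewrite eqb0; apply/negP => /eqP Hgk.
  by move: Hk; rewrite -Hg in Hgk; rewrite (perm_inj Hgk) eqxx.
- rewrite big1 // => k Hk. apply/eqP; rewrite eqb0; apply/negP => Hgk.
  by move: H; rewrite /inK; case/negP; apply/existsP; exists k; rewrite Hk.
Qed.

Lemma inK_gg (T : finType) (K : {set T}) (g : {perm T}) u : inK K g (g u) = (u \in K).
Proof.
apply/existsP/idP => [[k /andP [Hk /eqP /perm_inj <-]] //|Hu].
by exists u; rewrite Hu eqxx.
Qed.


Lemma Pu_eq (T : finType) (e : rel T) (Hvt : vertex_transitive e) (K : {set T}) x0 u :
  \sum_(g in Aut e) (inK K g u : nat) = #|K| * \sum_(g in Aut e) (g x0 == x0 : nat).
Proof.
under eq_bigr => g _ do rewrite inK_sum.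
rewrite exchange_big /= -sum_nat_const. apply: eq_bigr => k _. exact: cnt_const.
Qed.

Lemma N_eq (T : finType) (e : rel T) (Hvt : vertex_transitive e) x0 :
  #|Aut e| = #|T| * \sum_(g in Aut e) (g x0 == x0 : nat).
Proof.
rewrite (card_aut e x0) -sum_nat_const. apply: eq_bigr => y _. exact: cnt_const.
Qed.

Lemma ffun_count (T : finType) (A : {set {perm T}}) t (Q : pred {perm T}) :
  \sum_(f in ffun_on A) ([forall i : 'I_t, Q (f i)] : nat) = expn #|[set g in A | Q g]| t.
Proof.
rewrite sum_bool_card -[t in RHS]card_ord -card_ffun_on. apply: eq_card => f.
rewrite !inE. apply/andP/ffun_onP.
- by case=> /ffun_onP H1 /forallP H2 i; rewrite inE H1 H2.
- move=> H; split; first by apply/ffun_onP => i; move: (H i); rewrite inE => /andP [].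
  by apply/forallP => i; move: (H i); rewrite inE => /andP [].
Qed.

Lemma notin_Sf (T : finType) (K : {set T}) t (f : {ffun 'I_t -> {perm T}}) u :
  (u \notin Sf K f) = [forall i, ~~ inK K (f i) u].
Proof. by rewrite inE negb_exists. Qed.

Lemma notin_Sf2 (T : finType) (K : {set T}) t (f : {ffun 'I_t -> {perm T}}) u v :
  (u \notin Sf K f) && (v \notin Sf K f) = [forall i, ~~ inK K (f i) u && ~~ inK K (f i) v].
Proof.
rewrite !notin_Sf. apply/andP/forallP.
- by case=> /forallP H1 /forallP H2 i; rewrite H1 H2.
- by move=> H; split; apply/forallP => i; case/andP: (H i).
Qed.

Lemma pair_ident (T : finType) (e : rel T) (K : {set T}) t u v :
  \sum_(f in ffun_on (Aut e)) ((u \in Sf (t:=t) K f) && (v \in Sf K f) : nat)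
  + expn #|[set g in Aut e | ~~ inK K g u]| t + expn #|[set g in Aut e | ~~ inK K g v]| t
  = expn #|Aut e| t + expn #|[set g in Aut e | ~~ inK K g u && ~~ inK K g v]| t.
Proof.
rewrite -!ffun_count.
have -> : expn #|Aut e| t = \sum_(f : {ffun 'I_t -> {perm T}} | f \in ffun_on (Aut e)) 1.
{ by rewrite sum1_card card_ffun_on card_ord. }
under [X in _ + X + _ = _]eq_bigr => f _ do rewrite -notin_Sf.
under [X in _ + X = _]eq_bigr => f _ do rewrite -notin_Sf.
under [X in _ = _ + X]eq_bigr => f _ do rewrite -notin_Sf2.
rewrite -!big_split /=. apply: eq_bigr => f _.
by case: (u \in Sf K f); case: (v \in Sf K f).
Qed.


Lemma cheb (a b t : nat) : expn a t * b + expn b t * a <= expn a t.+1 + expn b t.+1.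
Proof.
wlog hab : a b / a <= b.
{ move=> H. case: (leqP a b) => h; first exact: H.
  rewrite addnC [X in _ <= X]addnC. apply: H. exact: ltnW. }
have ht : expn a t <= expn b t.
{ elim: t => [|t IH]; first by rewrite !expn0.
  rewrite !expnS; exact: leq_mul. }
rewrite !expnSr. set A := expn a t. set B := expn b t. nia.
Qed.

Lemma jensen (I : finType) (P : pred I) (x : I -> nat) t :
  (\sum_(i | P i) 1) * expn (\sum_(i | P i) x i) t
  <= expn (\sum_(i | P i) 1) t * \sum_(i | P i) expn (x i) t.
Proof.
set m := \sum_(i | P i) 1.
elim: t => [|t IH].
- rewrite !expn0 mul1n muln1. apply: leq_sum => i _. by rewrite expn0.
- have cs : (\sum_(i | P i) expn (x i) t) * (\sum_(i | P i) x i)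
            <= m * \sum_(i | P i) expn (x i) t.+1.
  { rewrite -(leq_pmul2l (isT : 0 < 2)).
    have E1 : (\sum_(i | P i) expn (x i) t) * (\sum_(i | P i) x i)
              = \sum_(i | P i) \sum_(j | P j) expn (x i) t * x j.
    { rewrite big_distrl /=. apply: eq_bigr => i _. by rewrite big_distrr. }
    have E2 : (\sum_(i | P i) expn (x i) t) * (\sum_(i | P i) x i)
              = \sum_(i | P i) \sum_(j | P j) expn (x j) t * x i.
    { rewrite E1 exchange_big. done. }
    have E3 : m * \sum_(i | P i) expn (x i) t.+1
              = \sum_(i | P i) \sum_(j | P j) expn (x i) t.+1.
    { rewrite big_distrr /=. apply: eq_bigr => i _. rewrite /m big_distrl /=. apply: eq_bigr => j _. by rewrite mul1n. }
    have E4 : m * \sum_(i | P i) expn (x i) t.+1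
              = \sum_(i | P i) \sum_(j | P j) expn (x j) t.+1.
    { rewrite E3 [LHS]exchange_big. done. }
    rewrite mul2n -addnn.
    rewrite [X in X + _ <= _]E1 [X in _ + X <= _]E2 mul2n -addnn.
    rewrite [X in _ <= X + _]E3 [X in _ <= _ + X]E4.
    rewrite -!big_split /=. apply: leq_sum => i _. rewrite -!big_split /=.
    apply: leq_sum => j _. exact: cheb. }
  rewrite expnSr mulnA. apply: (leq_trans (leq_mul IH (leqnn _))).
  rewrite -mulnA. rewrite expnSr -mulnA. by apply: leq_mul => //.
Qed.


Lemma cliqueP (T : finType) (e : rel T) (A : {set T}) :
  is_clique e A <-> (forall x y, x \in A -> y \in A -> x != y -> e x y).
Proof.
split.
- move=> /forallP H x y hx hy nxy. move: (H x); rewrite hx /= => /forallP /(_ y).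
  by rewrite hy /= nxy.
- move=> H; apply/forallP => x; apply/implyP => hx; apply/forallP => y; apply/implyP => hy.
  apply/implyP => nxy; exact: H.
Qed.

Lemma E2_row (T : finType) (e : rel T) (X Y : {set T}) u :
  \sum_v ((u \in X) && (v \in Y) && e u v : nat) = (u \in X) * \sum_v ((v \in Y) && e u v : nat).
Proof.
case: (u \in X); last by rewrite mul0n big1.
by rewrite mul1n.
Qed.

Lemma E2_split (T : finType) (e : rel T) (X Y : {set T}) :
  E2 e X [set: T] = E2 e X Y + E2 e X (~: Y).
Proof.
rewrite /E2 -big_split /=; apply: eq_bigr => u _; rewrite -big_split /=; apply: eq_bigr => v _.
rewrite in_setC in_setT. by case: (v \in Y); case: (u \in X); case: (e u v).
Qed.

Lemma E2_sym (T : finType) (e : rel T) (e_sym : symmetric e) (X Y : {set T}) :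
  E2 e X Y = E2 e Y X.
Proof.
rewrite /E2 exchange_big /=; apply: eq_bigr => u _; apply: eq_bigr => v _.
by rewrite (e_sym v u); case: (u \in Y); case: (v \in X).
Qed.

Lemma E2_XT (T : finType) (e : rel T) (d : nat) (Hd : forall x, \sum_v (e x v : nat) = d)
  (X : {set T}) : E2 e X [set: T] = #|X| * d.
Proof.
rewrite /E2 -sum_nat_const [RHS]big_mkcond /=. apply: eq_bigr => u _.
rewrite E2_row. case: (u \in X); last by rewrite mul0n.
rewrite mul1n -(Hd u). apply: eq_bigr => v _. by rewrite in_setT.
Qed.

Lemma E2_KK (T : finType) (e : rel T) (e_irr : irreflexive e) (K : {set T})
  (HK : is_clique e K) : E2 e K K = #|K| * (#|K| - 1).
Proof.
rewrite /E2 -sum_nat_const [RHS]big_mkcond /=. apply: eq_bigr => u _.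
rewrite E2_row. case Hu: (u \in K); last by rewrite mul0n.
rewrite mul1n (cardsD1 u K) Hu add1n subSS subn0 -sum1_card [RHS]big_mkcond /=.
apply: eq_bigr => v _. rewrite !inE.
case Hv: (v \in K); rewrite ?andbF ?andbT //=.
case: (eqVneq v u) => [->|nvu]; first by rewrite e_irr.
rewrite (proj1 (cliqueP e K) HK u v Hu Hv) //. by rewrite eq_sym.
Qed.

Lemma max_clique_miss (T : finType) (e : rel T) (e_sym : symmetric e) (K : {set T})
  (HK : is_clique e K) (Hmax : forall A, is_clique e A -> #|A| <= #|K|) u :
  u \notin K -> exists2 v, v \in K & ~~ e u v.
Proof.
move=> Hu. case: (boolP [exists v in K, ~~ e u v]).
- by case/existsP => v /andP [hv he]; exists v.
- rewrite negb_exists => /forallP H.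
  have Hall : forall v, v \in K -> e u v.
  { move=> v hv. move: (H v). by rewrite hv /= negbK. }
  have : is_clique e (u |: K).
  { apply/cliqueP => x y; rewrite !inE => /orP [/eqP ->|hx] /orP [/eqP ->|hy] nxy.
    - by rewrite eqxx in nxy.
    - exact: Hall.
    - rewrite e_sym; exact: Hall.
    - exact: (proj1 (cliqueP e K) HK). }
  move=> /Hmax. by rewrite cardsU1 Hu add1n ltnn.
Qed.

Lemma E2_CK (T : finType) (e : rel T) (e_sym : symmetric e) (K : {set T})
  (HK : is_clique e K) (Hmax : forall A, is_clique e A -> #|A| <= #|K|) :
  E2 e (~: K) K <= #|~: K| * (#|K| - 1).
Proof.
rewrite /E2 -sum_nat_const [X in _ <= X]big_mkcond /=. apply: leq_sum => u _.
rewrite E2_row. case Hu: (u \in ~: K); last by rewrite mul0n.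
rewrite mul1n. move: Hu; rewrite in_setC => Hu.
case: (max_clique_miss e_sym HK Hmax Hu) => v0 hv0 he0.
rewrite (cardsD1 v0 K) hv0 add1n subSS subn0 -sum1_card.
rewrite (bigD1 v0) //= hv0 (negbTE he0) add0n.
rewrite big_mkcond /= [X in _ <= X]big_mkcond /=. apply: leq_sum => v _.
rewrite !inE. by case: (v == v0); case: (v \in K); case: (e u v).
Qed.


Lemma sum_bool_cardT (X : finType) (P : pred X) :
  \sum_x (P x : nat) = #|[set x | P x]|.
Proof.
rewrite -sum1dep_card [RHS]big_mkcond /=; apply: eq_bigr => x _; by case: (P x).
Qed.

Lemma set2_inv (T : finType) (a b x y : T) : a != b -> x != y ->
  [set a; b] = [set x; y] -> (a == x) && (b == y) || (a == y) && (b == x).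
Proof.
move=> nab nxy /setP H.
have ha : a \in [set x; y] by rewrite -H !inE eqxx.
have hb : b \in [set x; y] by rewrite -H !inE eqxx orbT.
rewrite !inE in ha hb.
case/orP: ha => /eqP ha; subst a.
- case/orP: hb => /eqP hb; subst b; first by rewrite eqxx in nab.
  by rewrite !eqxx.
- case/orP: hb => /eqP hb; subst b; last by rewrite eqxx in nab.
  by rewrite !eqxx orbT.
Qed.

Lemma num_edges_E2 (T : finType) (e : rel T) (e_sym : symmetric e) (e_irr : irreflexive e)
  (S : {set T}) : E2 e S S = 2 * num_edges e S.
Proof.
set P := [set p : T * T | (p.1 \in S) && (p.2 \in S) && e p.1 p.2].
set phi := fun p : T * T => [set p.1; p.2].
have HE : E2 e S S = #|P|.
{ rewrite /E2 pair_bigA /= sum_bool_cardT. done. }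
have HF : num_edges e S = #|phi @: P|.
{ rewrite /num_edges. apply: eq_card => A. rewrite !inE.
  apply/andP/imsetP.
  - case=> hAS /existsP [x /existsP [y /andP [hxy /eqP hA]]].
    exists (x, y); last by rewrite hA.
    rewrite inE /= hxy andbT.
    by apply/andP; split; apply: (subsetP hAS); rewrite hA !inE eqxx ?orbT.
  - case=> [[x y]]; rewrite inE /= => /andP [/andP [hx hy] hxy] ->.
    split.
    + by apply/subsetP => z; rewrite !inE => /orP [] /eqP ->.
    + by apply/existsP; exists x; apply/existsP; exists y; rewrite hxy eqxx. }
rewrite HE HF -sum1_card (partition_big_imset phi) /= mulnC -sum_nat_const.
apply: eq_bigr => A /imsetP [[x y]].
rewrite inE /= => /andP [/andP [hx hy] hxy] ->.
have nxy : x != y by apply/eqP => exy; rewrite exy e_irr in hxy.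
rewrite (eq_bigl (fun p => p \in [set (x, y); (y, x)])).
- rewrite sum1_card cards2. suff : (x, y) != (y, x) by move=> ->.
  apply/eqP => [[]] /eqP; by rewrite (negbTE nxy).
- move=> [a b]. rewrite !inE /= /phi /=.
  apply/idP/idP.
  + move=> /andP [/andP [/andP [ha hb] hab] /eqP H2].
    have nab : a != b by apply/eqP => eab; rewrite eab e_irr in hab.
    case/orP: (set2_inv nab nxy H2) => /andP [/eqP -> /eqP ->]; by rewrite eqxx ?orbT.
  + case/orP => /eqP [-> ->]; rewrite ?hx ?hy ?hxy /=; first by rewrite eqxx.
    by rewrite (e_sym y x) hxy setUC eqxx.
Qed.


Lemma Zg_eq (T : finType) (e : rel T) (K : {set T}) (g : {perm T}) : g \in Aut e ->
  \sum_u \sum_v (~~ inK K g u && ~~ inK K g v && e u v : nat) = E2 e (~: K) (~: K).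
Proof.
move=> Hg. rewrite (reindex_inj (@perm_inj _ g)) /=. apply: eq_bigr => u _.
rewrite (reindex_inj (@perm_inj _ g)) /=. apply: eq_bigr => v _.
by rewrite !inK_gg (autE Hg) !in_setC.
Qed.

Lemma sum_and_mul (X : finType) (A : {pred X}) (b : bool) (P : pred X) :
  \sum_(x in A) (P x && b : nat) = b * \sum_(x in A) (P x : nat).
Proof. case: b; rewrite ?mul1n ?mul0n; last rewrite big1 //.
- by apply: eq_bigr => x _; rewrite andbT.
- by move=> x _; rewrite andbF.
Qed.

Lemma Jsum (T : finType) (e : rel T) (K : {set T}) :
  \sum_u \sum_v (e u v * #|[set g in Aut e | ~~ inK K g u && ~~ inK K g v]|)
  = #|Aut e| * E2 e (~: K) (~: K).
Proof.
rewrite -sum_nat_const.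
have -> : \sum_u \sum_v (e u v * #|[set g in Aut e | ~~ inK K g u && ~~ inK K g v]|)
  = \sum_u \sum_v \sum_(g in Aut e) (~~ inK K g u && ~~ inK K g v && e u v : nat).
{ apply: eq_bigr => u _; apply: eq_bigr => v _. by rewrite sum_and_mul sum_bool_card mulnC. }
rewrite exchange_big /=. under eq_bigr => v _ do rewrite exchange_big /=.
rewrite exchange_big /=. apply: eq_bigr => g Hg. rewrite exchange_big /=. exact: Zg_eq.
Qed.

Lemma N1 (T : finType) (e : rel T) (K : {set T}) t (B : nat)
  (HB : forall u, #|[set g in Aut e | ~~ inK K g u]| = B) :
  \sum_(f : {ffun 'I_t -> {perm T}} | f \in ffun_on (Aut e)) E2 e (Sf K f) (Sf K f)
  + 2 * (\sum_u \sum_v (e u v : nat)) * expn B t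
  = (\sum_u \sum_v (e u v : nat)) * expn #|Aut e| t
    + \sum_u \sum_v (e u v * expn #|[set g in Aut e | ~~ inK K g u && ~~ inK K g v]| t).
Proof.
have E1 : 2 * (\sum_u \sum_v (e u v : nat)) * expn B t
  = \sum_u \sum_v (e u v * (2 * expn B t)).
{ rewrite (mulnC 2) -mulnA big_distrl /=. apply: eq_bigr => u _. by rewrite big_distrl. }
have E3 : (\sum_u \sum_v (e u v : nat)) * expn #|Aut e| t
  = \sum_u \sum_v (e u v * expn #|Aut e| t).
{ rewrite big_distrl /=. apply: eq_bigr => u _. by rewrite big_distrl. }
rewrite E1 E3 /E2 exchange_big /=. under eq_bigr => u _ do rewrite exchange_big /=.
rewrite -!big_split /=. apply: eq_bigr => u _.
rewrite -!big_split /=. apply: eq_bigr => v _.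
rewrite sum_and_mul.
have := pair_ident e K t u v. rewrite !HB => H.
case: (e u v); last by rewrite !mul0n.
rewrite !mul1n mul2n -addnn addnA. exact: H.
Qed.


Lemma inK_clique (T : finType) (e : rel T) (K : {set T}) (HK : is_clique e K)
  (g : {perm T}) x y : g \in Aut e -> inK K g x -> inK K g y -> x != y -> e x y.
Proof.
move=> Hg /existsP [k1 /andP [hk1 /eqP <-]] /existsP [k2 /andP [hk2 /eqP <-]] nxy.
rewrite (autE Hg). apply: (proj1 (cliqueP e K) HK) => //.
by apply/eqP => E; move: nxy; rewrite E eqxx.
Qed.

Lemma chi_le (T : finType) (e : rel T) (K : {set T}) (HK : is_clique e K) t
  (f : {ffun 'I_t -> {perm T}}) : 0 < t -> f \in ffun_on (Aut e) ->
  chi (compl e) (Sf K f) <= t.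
Proof.
move=> Ht Hf.
have Hcol : colorable (compl e) (Sf K f) t.
{ case: t f Ht Hf => [//|t'] f _ Hf.
  apply/existsP. exists [ffun x => odflt ord0 [pick i | inK K (f i) x]].
  apply/forallP => x; apply/implyP => hx; apply/forallP => y; apply/implyP => hy.
  apply/implyP => /andP [nxy]. rewrite /compl nxy /= => nexy.
  rewrite !ffunE.
  move: hx hy; rewrite !inE => /existsP [i hi] /existsP [j hj].
  case: pickP => [i0 hi0|]; last by move=> /(_ i); rewrite hi.
  case: pickP => [j0 hj0|]; last by move=> /(_ j); rewrite hj.
  rewrite /=. apply/eqP => E; subst j0.
  have Hfi : f i0 \in Aut e by move/ffun_onP: Hf.
  have : e x y := inK_clique HK Hfi hi0 hj0 nxy.
  by rewrite (negbTE nexy). }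
rewrite /chi. case: ex_minnP => m _ Hmin. exact: Hmin.
Qed.

Lemma sum_filter_mul (X : finType) (P : pred X) (F : X -> nat) :
  \sum_(x | P x) F x = \sum_x (P x * F x).
Proof. rewrite big_mkcond /=; apply: eq_bigr => x _; by case: (P x); rewrite ?mul1n ?mul0n. Qed.

Lemma sum_pair_filter (T : finType) (e : rel T) (F : T -> T -> nat) :
  \sum_(p : T * T | e p.1 p.2) F p.1 p.2 = \sum_u \sum_v (e u v * F u v).
Proof. by rewrite (sum_filter_mul (fun p : T * T => e p.1 p.2)) [RHS]pair_bigA. Qed.

Lemma B_split (T : finType) (e : rel T) (K : {set T}) u :
  #|[set g in Aut e | ~~ inK K g u]| + \sum_(g in Aut e) (inK K g u : nat) = #|Aut e|.
Proof.
rewrite -sum_bool_card -big_split /= -sum1_card. apply: eq_bigr => g _.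
by case: (inK K g u).
Qed.

Lemma aut1 (T : finType) (e : rel T) : (1%g : {perm T}) \in Aut e.
Proof. apply: autI => u v. by rewrite !perm1. Qed.

Lemma omega_half (T : finType) (e : rel T) (e_sym : symmetric e) (Hvt : vertex_transitive e)
  (K : {set T}) (HK : is_clique e K) (Hmax : forall A, is_clique e A -> #|A| <= #|K|) :
  2 * #|K| <= #|T| \/ #|K| = #|T|.
Proof.
have hmc := max_card K.
case: (ltngtP #|K| #|T|) => [hlt|hgt|->]; [|by move: hmc; rewrite leqNgt hgt|by right].
- left. have : 0 < #|~: K| by move: (cardsC K); lia.
  case/card_gt0P => u; rewrite in_setC => hu.
  case: (max_clique_miss e_sym HK Hmax hu) => v hv huv.
  rewrite leqNgt; apply/negP => Hlt.
  set x0 := u.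
  have HN := N_eq Hvt x0. have HPu := Pu_eq Hvt K x0 u. have HPv := Pu_eq Hvt K x0 v.
  set c := \sum_(g in Aut e) (g x0 == x0 : nat) in HN HPu HPv.
  have Hsum : #|Aut e| < \sum_(g in Aut e) (inK K g u + inK K g v).
  { rewrite big_split /= HPu HPv HN.
    have : 0 < #|Aut e| by apply/card_gt0P; exists 1%g; exact: aut1.
    rewrite HN => Hc. nia. }
  have : [exists g in Aut e, inK K g u && inK K g v].
  { apply: contraT => /exists_inPn H.
    suff : \sum_(g in Aut e) (inK K g u + inK K g v) <= #|Aut e| by rewrite leqNgt Hsum.
    rewrite -sum1_card. apply: leq_sum => g hg. move: (H g hg).
    by case: (inK K g u); case: (inK K g v). }
  case/exists_inP => g hg /andP [hu' hv'].
  have nuv : u != v by apply/eqP => E; move: hu; rewrite E hv.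
  by move: huv; rewrite (inK_clique HK hg hu' hv' nuv).
Qed.

End CombPart.

Section RealPart.
Local Open Scope R_scope.

Lemma combine (D2 N B Z J S n w : R) (t : nat) :
 0 < n -> 0 < N -> 0 <= D2 -> 0 <= Z -> 0 <= J -> w <= n ->
 n * B + w * N = n * N ->
 D2 * (n - w)^2 <= Z * n^2 ->
 D2 * (N * Z)^t <= D2^t * J ->
 S + 2 * D2 * B^t = D2 * N^t + J ->
 ((n - w)/n)^t <= 2928/10000 ->
 D2 * N^t <= 2 * S.
Proof.
move=> Hn HN HD HZ HJ Hwn HB HZ2 HJen HS HX.
set x := (n - w) / n in HX.
have Hx0 : 0 <= x by rewrite /x; apply: Rmult_le_pos; [lra|apply: Rlt_le; apply: Rinv_0_lt_compat; lra].
have HBx : B = N * x.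
{ rewrite /x. apply: (Rmult_eq_reg_l n); last lra.
  have -> : n * (N * ((n - w) / n)) = N * (n - w) by field; lra.
  lra. }
have HZx : D2 * x ^ 2 <= Z.
{ have -> : D2 * x ^ 2 = D2 * (n - w) ^ 2 / n ^ 2 by rewrite /x; field; lra.
  have Hn2 : 0 < n ^ 2 by apply: pow_lt.
  apply: (Rmult_le_reg_r (n ^ 2)) => //.
  have -> : D2 * (n - w) ^ 2 / n ^ 2 * n ^ 2 = D2 * (n - w) ^ 2 by field; lra.
  exact: HZ2. }
set X := x ^ t in HX.
have HX0 : 0 <= X by apply: pow_le.
have HQ : 0 <= 2 * X * X - 4 * X + 1 by nra.
have HNt : 0 < N ^ t by apply: pow_lt.
destruct (Req_dec D2 0) as [H0|H0].
- rewrite H0 in HS *. have : S = J by lra. move=> ->. lra.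
- have HDp : 0 < D2 by lra.
  have HDt : 0 < D2 ^ t by apply: pow_lt.
  have H1 : (N * (D2 * x ^ 2)) ^ t <= (N * Z) ^ t.
  { apply: pow_incr. split; [apply: Rmult_le_pos; [lra|apply: Rmult_le_pos; [lra|apply: pow_le; lra]]|].
    apply: Rmult_le_compat_l; lra. }
  have H2 : (N * (D2 * x ^ 2)) ^ t = N ^ t * D2 ^ t * (X * X).
  { rewrite /X. clear. elim: t => [|t IH] /=; first ring. rewrite IH. ring. }
  have HJ2 : D2 * N ^ t * (X * X) <= J.
  { apply: (Rmult_le_reg_l (D2 ^ t)) => //.
    have : D2 * (N * (D2 * x ^ 2)) ^ t <= D2 * (N * Z) ^ t by apply: Rmult_le_compat_l; lra.
    rewrite H2. nra. }
  have HBt : B ^ t = N ^ t * X by rewrite HBx Rpow_mult_distr.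
  rewrite HBt in HS.
  have HP : 0 <= D2 * N ^ t * (2 * X * X - 4 * X + 1).
  { apply: Rmult_le_pos => //. apply: Rmult_le_pos; lra. }
  nra.
Qed.

End RealPart.

Section FinalHelpers.
Local Set Implicit Arguments.
Local Unset Strict Implicit.
Local Unset Printing Implicit Defensive.

Lemma INR_muln (a b : nat) : INR (a * b)%N = (INR a * INR b)%R.
Proof. exact: mult_INR. Qed.
Lemma INR_addn (a b : nat) : INR (a + b)%N = (INR a + INR b)%R.
Proof. exact: plus_INR. Qed.
Lemma INR_expn (a t : nat) : INR (expn a t) = (INR a ^ t)%R.
Proof. elim: t => [|t IH]; first by rewrite expn0. by rewrite expnS INR_muln IH. Qed.

Lemma arithN4 (Z W c' d w k : nat) :
  (Z + W = c' * d)%N -> (w * k + W = w * d)%N -> (W <= c' * k)%N ->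
  (d * (c' * c') <= Z * (w + c'))%N.
Proof.
move=> h1 h2 h3.
have f1 : ((Z + W) * (w + c') = c' * d * (w + c'))%N by rewrite h1.
have f2 : (c' * (w * k + W) = c' * (w * d))%N by rewrite h2.
have f3 : (W * w <= c' * k * w)%N by apply: leq_mul.
move: f1 f2 f3. rewrite !mulnDr !mulnDl.
have q1 : (c' * d * w = c' * (w * d))%N by rewrite -mulnA (mulnC d w).
have q2 : (c' * d * c' = d * (c' * c'))%N by rewrite mulnAC mulnC.
have q3 : (W * c' = c' * W)%N by rewrite mulnC.
have q4 : (c' * k * w = c' * (w * k))%N by rewrite -mulnA (mulnC k w).
rewrite q1 q2 q3 q4.
move: (Z * w) (Z * c') (W * w) (c' * W) (c' * (w * k)) (c' * (w * d)) (d * (c' * c')).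
move=> a b x y p q r. lia.
Qed.


End FinalHelpers.

Theorem lemma2p2 (T : finType) (e : rel T)
    (e_sym : symmetric e) (e_irr : irreflexive e)
    (e_vt : vertex_transitive e) :
  exists S : {set T},
    (num_edges e [set: T] <= 2 * num_edges e S)%N /\
    (INR (chi (compl e) S) <= ln 4 * INR #|T| / INR (omega e))%R.
Proof.
case: (posnP #|T|) => [Hn0|Hnpos].
- exists set0. split.
  + have H := num_edges_E2 e_sym e_irr [set: T].
    have H0 : E2 e [set: T] [set: T] = 0%nat.
    { rewrite /E2 big1 // => u _. by move: (@fintype0 T u); rewrite Hn0. }
    move: H; rewrite H0. lia.
  + have Hchi : chi (compl e) set0 = 0%nat.
    { apply/eqP; rewrite -leqn0. rewrite /chi; case: ex_minnP => m _ Hmin. apply: Hmin.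
      apply/existsP. exists [ffun x => False_rect 'I_0 (@fintype0 T x Hn0)].
      apply/forallP => x. by move: (@fintype0 T x Hn0). }
    rewrite Hchi Hn0 /=. lra.
- case/card_gt0P: (Hnpos) => x0 _.
  have Hcl0 : (0 < #|[pred A : {set T} | is_clique e A]|)%N.
  { apply/card_gt0P; exists set0. rewrite inE. apply/cliqueP => x y. by rewrite inE. }
  case: (eq_bigmax_cond (fun A : {set T} => #|A|) Hcl0) => K HKin Hom'.
  have HK : is_clique e K by move: HKin; rewrite inE.
  have Hom : omega e = #|K| by rewrite /omega -Hom'.
  have Hmax : forall A, is_clique e A -> (#|A| <= #|K|)%N.
  { move=> A HA. rewrite -Hom. exact: (@leq_bigmax_cond _ (fun A => is_clique e A) (fun A => #|A|) A HA). }
  have Hw1 : (0 < #|K|)%N.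
  { have : is_clique e [set x0] by apply/cliqueP => x y; rewrite !inE => /eqP -> /eqP ->; rewrite eqxx.
    move/Hmax. by rewrite cards1. }
  have Hhalf := omega_half e_sym e_vt HK Hmax.
  rewrite Hom.
  set n := #|T| in Hnpos Hhalf *. set w := #|K| in Hw1 Hhalf Hmax *.
  have Llo := ln4_lo.
  have Hnw : (w <= n)%N by rewrite /w /n; exact: max_card.
  have HwR : (0 < INR w)%R by apply: lt_0_INR; apply/ltP.
  have HnwR : (INR w <= INR n)%R by apply: le_INR; apply/leP.
  set r := (ln 4 * INR n / INR w)%R.
  have Hr : (ln 4 <= r)%R.
  { rewrite /r. apply: (Rmult_le_reg_r (INR w)) => //.
    have -> : (ln 4 * INR n / INR w * INR w = ln 4 * INR n)%R by field; lra.
    apply: Rmult_le_compat_l; lra. }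
  have [t [Ht1 Ht2]] : exists t : nat, (INR t <= r /\ r < INR t + 1)%R.
  { have [h1 h2] := base_Int_part r.
    have hz : (-1 < Int_part r)%Z by apply: lt_IZR; lra.
    exists (BinInt.Z.to_nat (Int_part r)).
    rewrite INR_IZR_INZ Znat.Z2Nat.id; [lra|lia]. }
  have Htpos : (0 < t)%N.
  { case: t Ht1 Ht2 => [|t] //= _ H. lra. }
  have hw : lt 0 w by apply/ltP.
  have hh : le (Nat.mul 2 w) n \/ w = n.
  { case: Hhalf => [h|h]; [left; apply/leP; exact: h|right; exact: h]. }
  have HX := anal n w t hw hh Ht1 Ht2.
  set N := #|Aut e|.
  have HNpos : (0 < N)%N by apply/card_gt0P; exists 1%g; exact: aut1.
  set c := \sum_(g in Aut e) (g x0 == x0 : nat).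
  have HNc : N = (n * c)%N by rewrite /N /n /c; exact: N_eq.
  set B := #|[set g in Aut e | ~~ inK K g x0]|.
  have HB : forall u, #|[set g in Aut e | ~~ inK K g u]| = B.
  { move=> u. have h1 := B_split e K u. have h2 := B_split e K x0.
    rewrite (Pu_eq e_vt K x0 u) in h1. rewrite (Pu_eq e_vt K x0 x0) in h2.
    move: h1 h2; rewrite -/N -/c -/B => h1 h2. lia. }
  have HBc : (B + w * c = N)%N.
  { have h2 := B_split e K x0. rewrite (Pu_eq e_vt K x0 x0) in h2. move: h2. by rewrite -/N -/c -/B. }
  have N3 : (n * B + w * N = n * N)%N by rewrite HNc in HBc *; nia.
  set d := \sum_v (e x0 v : nat).
  have Hd : forall x, \sum_v (e x v : nat) = d by move=> x; exact: deg_const.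
  set D2 := \sum_u \sum_v (e u v : nat).
  have HD2E : D2 = E2 e [set: T] [set: T].
  { rewrite /D2 /E2. apply: eq_bigr => u _; apply: eq_bigr => v _. by rewrite !in_setT. }
  set Z := E2 e (~: K) (~: K).
  have N4 : (D2 * (#|~: K| * #|~: K|) <= Z * (n * n))%N.
  { have e1 := E2_XT Hd [set: T]. have e2 := E2_XT Hd (~: K). have e3 := E2_XT Hd K.
    have e4 := E2_split e (~: K) K. have e5 := E2_split e K K.
    have e6 := E2_sym e_sym K (~: K). have e7 := E2_KK e_irr HK.
    have e8 := E2_CK e_sym HK Hmax. have e9 := cardsC K.
    rewrite cardsT in e1. rewrite -HD2E in e1.
    move: e1 e2 e3 e4 e5 e6 e7 e8 e9. rewrite -/n -/w -/Z.
    set W := E2 e (~: K) K. set c' := #|~: K|.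
    move=> e1 e2 e3 e4 e5 e6 e7 e8 e9.
    have h2 : (w * (w - 1) + W = w * d)%N by rewrite -e7 -e6 -e5 e3.
    have h1 : (Z + W = c' * d)%N by rewrite -e2 e4 addnC.
    have g := arithN4 h1 h2 e8.
    rewrite e9 in g. rewrite e1.
    rewrite -mulnA (mulnCA Z n n) leq_mul2l g orbT //. }
  have Hc' : (#|~: K| + w = n)%N by rewrite addnC; exact: cardsC.
  set J := \sum_u \sum_v (e u v * expn #|[set g in Aut e | ~~ inK K g u && ~~ inK K g v]| t)%N.
  have HJ := jensen (fun p : T * T => e p.1 p.2)
    (fun p : T * T => #|[set g in Aut e | ~~ inK K g p.1 && ~~ inK K g p.2]|) t.
  have s1 : (\sum_(p : T * T | e p.1 p.2) 1 = D2)%N.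
  { rewrite (sum_pair_filter e (fun _ _ => 1%N)). apply: eq_bigr => u _.
    apply: eq_bigr => v _. by rewrite muln1. }
  have s2 : (\sum_(p : T * T | e p.1 p.2)
     #|[set g in Aut e | ~~ inK K g p.1 && ~~ inK K g p.2]| = N * Z)%N.
  { by rewrite (sum_pair_filter e (fun u v => #|[set g in Aut e | ~~ inK K g u && ~~ inK K g v]|)) Jsum. }
  have s3 : (\sum_(p : T * T | e p.1 p.2)
     expn #|[set g in Aut e | ~~ inK K g p.1 && ~~ inK K g p.2]| t = J)%N.
  { by rewrite (sum_pair_filter e (fun u v => expn #|[set g in Aut e | ~~ inK K g u && ~~ inK K g v]| t)). }
  rewrite /= s1 s2 s3 in HJ.
  have HN1 := @N1 T e K t B HB.
  rewrite -/D2 -/N -/J in HN1.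
  set Ssum := \sum_(f : {ffun 'I_t -> {perm T}} | f \in ffun_on (Aut e)) E2 e (Sf K f) (Sf K f) in HN1.
  have Hcomb : (D2 * expn N t <= 2 * Ssum)%N.
  { apply/leP; apply: INR_le. rewrite INR_muln INR_muln INR_expn.
    apply: (@combine (INR D2) (INR N) (INR B) (INR Z) (INR J) (INR Ssum) (INR n) (INR w) t).
    - apply: lt_0_INR. by apply/ltP.
    - apply: lt_0_INR. by apply/ltP.
    - exact: pos_INR.
    - exact: pos_INR.
    - exact: pos_INR.
    - exact: HnwR.
    - have := f_equal INR N3. by rewrite !INR_addn !INR_muln.
    - have := le_INR _ _ (elimT leP N4). rewrite !INR_muln.
      have -> : (INR n - INR w = INR #|~: K|)%R.
      { rewrite -Hc' INR_addn. ring. }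
      move=> H. by rewrite /= !Rmult_1_r.
    - have := le_INR _ _ (elimT leP HJ). by rewrite !INR_muln !INR_expn INR_muln.
    - have H2 := f_equal INR HN1. rewrite !INR_addn !INR_muln !INR_expn in H2.
      have E2' : INR 2 = 2%R by simpl; ring.
      by rewrite E2' in H2.
    - exact: HX. }
  have HU : #|@ffun_on_mem 'I_t _ (mem (Aut e))| = expn N t.
  { by rewrite card_ffun_on card_ord. }
  case: (boolP [exists f : {ffun 'I_t -> {perm T}},
           (f \in ffun_on (Aut e)) && (D2 <= 2 * E2 e (Sf K f) (Sf K f))%N]).
  - case/existsP => f /andP [Hf Hfe].
    exists (Sf K f). split.
    + have h1 := num_edges_E2 e_sym e_irr [set: T].
      have h2 := num_edges_E2 e_sym e_irr (Sf K f).
      rewrite -HD2E in h1. lia.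
    + have := chi_le HK Htpos Hf. move/leP/le_INR => h. lra.
  - rewrite negb_exists => /forallP H.
    exfalso.
    have Hlt : (2 * Ssum + expn N t <= expn N t * D2)%N.
    { rewrite -HU -sum_nat_const -sum1_card /Ssum big_distrr -big_split /=.
      apply: leq_sum => f Hf. move: (H f). rewrite Hf /= -ltnNge. by rewrite addn1. }
    have hp : (0 < expn N t)%N by rewrite expn_gt0 HNpos.
    move: Hcomb Hlt hp. rewrite mulnC. lia.
Qed.
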